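(* Let $1\le k<n/2$ and let $\Omega$ be the set of $k$-subsets of $\{1,\dots,n\}$ with the natural action of $\mathrm{Sym}(n)$. Then $\mathrm{Sym}(n)$ contains an element of prime order $p$ that is quasi-semiregular on $\Omega$ if and only if $k<p$ and $p\mid n-k$. Moreover, any such quasi-semiregular element of order $p$ has cycle type $1^kp^{(n-k)/p}$ on $\{1,\dots,n\}$.
   Context: A permutation $g$ is quasi-semiregular if $\langle g\rangle$ has a unique fixed point and acts semiregularly (only the identity fixes a point) on the remaining points. *)

(* Defs.v *)
From mathcomp Require Import all_boot all_fingroup.
Set Implicit Arguments. Unset Strict Implicit. Unset Printing Implicit Defensive.
Import GroupScope.

(* Omega: the set of k-subsets of {1..n}, modelled as 'I_n. *)
Definition ksubsets (n k : nat) : {set {set 'I_n}} :=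
  [set A : {set 'I_n} | #|A| == k].

Definition set_fixed (n : nat) (h : {perm 'I_n}) (A : {set 'I_n}) : Prop :=
  h @: A = A.

Definition quasi_semiregular_on (n : nat) (Om : {set {set 'I_n}})
  (g : {perm 'I_n}) : Prop :=
  exists A, [/\ A \in Om,
     (forall h, h \in <[g]> -> set_fixed h A),
     (forall B, B \in Om -> (forall h, h \in <[g]> -> set_fixed h B) -> B = A)
   & (forall B, B \in Om -> B != A ->
        forall h, h \in <[g]> -> set_fixed h B -> h = 1)].

Definition has_cycle_type_1k_pm (n : nat) (g : {perm 'I_n}) (k p m : nat)
  : Prop :=
  [/\ #|[set C in porbits g | #|C| == 1%N]| = k,
      #|[set C in porbits g | #|C| == p]| = m
    & forall C, C \in porbits g -> (#|C| == 1%N) || (#|C| == p)].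

(* Main.v *)
Require Import Defs.
From mathcomp Require Import all_boot all_fingroup all_solvable.
Import GroupScope.
Set Implicit Arguments. Unset Strict Implicit.

Section Tool.
Variable n : nat.
Implicit Types (g h : {perm 'I_n}) (A B O Q : {set 'I_n}).

Definition inv g A := forall x, (g x \in A) = (x \in A).

Lemma invP g A : set_fixed g A <-> inv g A.
Proof.
rewrite /set_fixed /inv; split.
  by move=> E x; rewrite -{1}E mem_imset //; apply: perm_inj.
move=> H; apply/eqP; rewrite eqEcard card_imset; last exact: perm_inj.
rewrite leqnn andbT; apply/subsetP => _ /imsetP[x xA ->]; by rewrite H.
Qed.

Lemma invX g A i : inv g A -> inv (g ^+ i) A.
Proof.
move=> H; elim: i => [|i IH] x; first by rewrite expg0 perm1.
by rewrite expgSr permM H IH.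
Qed.

Lemma inv_cycle g A h : inv g A -> h \in <[g]> -> set_fixed h A.
Proof. by move=> H /cycleP[i ->]; apply/invP; apply: invX. Qed.

Lemma invU g A B : inv g A -> inv g B -> inv g (A :|: B).
Proof. by move=> HA HB x; rewrite !inE HA HB. Qed.
Lemma invD g A B : inv g A -> inv g B -> inv g (A :\: B).
Proof. by move=> HA HB x; rewrite !inE HA HB. Qed.
Lemma invC g A : inv g A -> inv g (~: A).
Proof. by move=> HA x; rewrite !inE HA. Qed.

Definition Fix g := [set x | g x == x].

Lemma inv_subF g B : B \subset Fix g -> inv g B.
Proof.
move=> sB x; case: (boolP (x \in Fix g)) => [|xF]; first by rewrite inE => /eqP ->.
have gxF : g x \notin Fix g.
  by apply: contra xF; rewrite !inE => /eqP /perm_inj ->.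
apply/idP/idP => H; [ by case/negP: gxF; apply: (subsetP sB) | by case/negP: xF; apply: (subsetP sB)].
Qed.

Lemma inv_porbit g x : inv g (porbit g x).
Proof.
move=> y; rewrite porbit_sym; have := porbit_perm g 1%N y; rewrite expg1 => ->.
by rewrite porbit_sym.
Qed.

Lemma porbit_sub g A x : inv g A -> x \in A -> porbit g x \subset A.
Proof.
move=> H xA; apply/subsetP => _ /porbitP[i ->].
by move: (invX i H x); rewrite xA.
Qed.

Lemma porbit_disj g A y : inv g A -> y \notin A -> [disjoint porbit g y & A].
Proof.
move=> H yA; rewrite -setI_eq0; apply/eqP/setP => z; rewrite !inE.
apply/andP => -[zy zA]; case/negP: yA.
by apply: (subsetP (porbit_sub H zA)); rewrite porbit_sym.
Qed.

Lemma porbit_fix g x : g x = x -> porbit g x = [set x].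
Proof.
move=> gx; apply/setP => y; rewrite inE; apply/porbitP/eqP => [[i ->]|->].
  by elim: i => [|i IH]; rewrite ?expg0 ?perm1 // expgSr permM IH gx.
by exists 0%N; rewrite expg0 perm1.
Qed.

Lemma porbit1 g x : #|porbit g x| = 1%N -> g x = x.
Proof.
move/eqP/cards1P => [y E].
have := mem_porbit g 1%N x; have := porbit_id g x; rewrite E expg1 !inE.
by move=> /eqP -> /eqP.
Qed.

Lemma porbit_dvd g x : #|porbit g x| %| #[g].
Proof. by rewrite porbitE; apply: dvdn_orbit. Qed.

Lemma exists_sub A m : (m <= #|A|)%N -> exists Q : {set 'I_n}, Q \subset A /\ #|Q| = m.
Proof.
elim: m => [|m IH] H; first by exists set0; rewrite sub0set cards0.
have [Q [sQ cQ]] := IH (ltnW H).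
have : (0 < #|A :\: Q|)%N.
  by rewrite cardsD (setIidPr sQ) cQ subn_gt0.
rewrite card_gt0 => /set0Pn [y]; rewrite inE => /andP [yQ yA].
exists (y |: Q); by rewrite subUset sub1set yA sQ cardsU1 yQ cQ.
Qed.


Lemma swap g A O Q : inv g A -> O \subset A -> [disjoint Q & A] ->
  #|O| = #|Q| -> (0 < #|Q|)%N -> inv g O -> inv g Q ->
  [/\ inv g ((A :\: O) :|: Q), #|(A :\: O) :|: Q| = #|A| & (A :\: O) :|: Q != A].
Proof.
move=> iA sO dQ cOQ Q0 iO iQ; split.
- by apply: invU => //; apply: invD.
- rewrite cardsU cardsD (setIidPr sO).
  have -> : (A :\: O) :&: Q = set0.
    apply/setP => z; rewrite !inE; apply/negP => /andP[/andP[_ zA] zQ].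
    by move: dQ; rewrite disjoints_subset => /subsetP/(_ _ zQ); rewrite inE zA.
  rewrite cards0 subn0 -cOQ subnK //; exact: subset_leq_card.
- move: Q0; rewrite card_gt0 => /set0Pn[y yQ]; apply/negP => /eqP E.
  move: dQ; rewrite disjoints_subset => /subsetP/(_ _ yQ); rewrite inE -E !inE yQ.
  by rewrite orbT.
Qed.

Section Prime.
Variables (p : nat) (g : {perm 'I_n}).
Hypotheses (pp : prime p) (og : #[g] = p).

Lemma porbit_size x : #|porbit g x| = 1%N \/ #|porbit g x| = p.
Proof.
have := porbit_dvd g x; rewrite og.
case: (eqVneq #|porbit g x| 1%N) => [->|ne]; first by left.
by move/(prime_nt_dvdP pp ne); right.
Qed.

Lemma porbit_nfix x : g x != x -> #|porbit g x| = p.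
Proof.
by move=> nx; case: (porbit_size x) => // /porbit1 E; rewrite E eqxx in nx.
Qed.

Lemma exists_nfix : exists x, g x != x.
Proof.
case: (pickP (fun x => g x != x)) => [x nx | H]; first by exists x.
have g1 : g = 1 by apply/permP => x; rewrite perm1; apply/eqP; move: (H x) => /negbFE.
by move: og pp; rewrite g1 order1 => <-.
Qed.

Lemma forward A : (1 <= #|A|)%N -> (#|A|.*2 < n)%N -> inv g A ->
  (forall B, #|B| = #|A| -> inv g B -> B = A) ->
  A = Fix g /\ (#|A| < p)%N.
Proof.
move=> A1 A2 iA U.
have cnt : forall O Q : {set 'I_n}, O \subset A -> [disjoint Q & A] -> #|O| = #|Q| ->
    (0 < #|Q|)%N -> inv g O -> inv g Q -> False.
  move=> O Q sO dQ cOQ Q0 iO iQ.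
  have [i1 i2 i3] := swap iA sO dQ cOQ Q0 iO iQ.
  by move: i3; rewrite (U _ i2 i1) eqxx.
have p0 : (0 < p)%N by apply: prime_gt0.
have sAF : A \subset Fix g.
  apply/subsetP => x xA; rewrite inE; apply/negPn/negP => nx.
  have sO := porbit_sub iA xA.
  have cO := porbit_nfix nx.
  case: (boolP [exists y, (y \notin A) && (g y != y)]).
    case/existsP => y /andP[yA ny].
    apply: (cnt _ _ sO (porbit_disj iA yA)); rewrite ?cO ?porbit_nfix //.
      exact: inv_porbit.
    exact: inv_porbit.
  rewrite negb_exists => /forallP H.
  have sCF : ~: A \subset Fix g.
    apply/subsetP => y; rewrite !inE => yA; move: (H y); rewrite yA /=.
    by rewrite negbK.
  have pk : (p <= #|A|)%N by rewrite -cO; apply: subset_leq_card.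
  have : (p <= #|~: A|)%N.
    have := cardsC A; rewrite card_ord => E.
    rewrite -(leq_add2l #|A|) E; apply: leq_trans (ltnW A2).
    by rewrite -addnn leq_add2l.
  case/exists_sub => Q [sQ cQ].
  apply: (cnt _ Q sO); rewrite ?cO ?cQ //.
  - by rewrite disjoints_subset.
  - exact: inv_porbit.
  - by apply: inv_subF; apply: subset_trans sCF.
have AF : A = Fix g.
  apply/eqP; rewrite eqEsubset sAF /=; apply/subsetP => y yF.
  apply/negPn/negP => yA.
  move: A1; rewrite card_gt0 => /set0Pn[x xA].
  apply: (cnt [set x] [set y]); rewrite ?sub1set ?cards1 //.
  - by rewrite disjoints_subset sub1set inE.
  - by apply: inv_subF; rewrite sub1set (subsetP sAF).
  - by apply: inv_subF; rewrite sub1set.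
split => //; rewrite ltnNge; apply/negP => pk.
have [x nx] := exists_nfix.
have xA : x \notin A by rewrite AF inE.
have [O [sO cO]] := exists_sub pk.
apply: (cnt O (porbit g x) sO (porbit_disj iA xA)); rewrite ?porbit_nfix ?cO //.
- by apply: inv_subF; rewrite -AF.
- exact: inv_porbit.
Qed.


Lemma partition_porbits : partition (porbits g) [set: 'I_n].
Proof.
apply/and3P; split.
- apply/eqP/setP => x; rewrite inE; apply/bigcupP; exists (porbit g x).
    by apply: imset_f.
  exact: porbit_id.
- apply/trivIsetP => _ _ /imsetP[x _ ->] /imsetP[y _ ->] ne.
  rewrite -setI_eq0; apply/eqP/setP => z; rewrite !inE; apply/andP => -[zx zy].
  by move: ne; rewrite -eq_porbit_mem in zx; rewrite -eq_porbit_mem in zy;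
     rewrite -(eqP zx) -(eqP zy) eqxx.
- apply/imsetP => -[x _ E]; have := porbit_id g x; by rewrite -E inE.
Qed.

Lemma cycle_type k : #|Fix g| = k ->
  has_cycle_type_1k_pm g k p ((n - k) %/ p) /\ p %| n - k.
Proof.
move=> cF.
have p1 : (1 < p)%N by apply: prime_gt1.
have S1 : [set C in porbits g | #|C| == 1%N] = (fun x => [set x]) @: Fix g.
  apply/setP => C; rewrite inE; apply/andP/imsetP.
    case=> /imsetP[x _ ->] /eqP c1; exists x; first by rewrite inE (porbit1 c1).
    by rewrite porbit_fix // (porbit1 c1).
  case=> x; rewrite inE => /eqP gx ->; rewrite -(porbit_fix gx).
  by rewrite imset_f // porbit_fix // cards1.
have c1 : #|[set C in porbits g | #|C| == 1%N]| = k.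
  by rewrite S1 card_imset //; apply: set1_inj.
have sizes : forall C, C \in porbits g -> (#|C| == 1%N) || (#|C| == p).
  move=> _ /imsetP[x _ ->]; by case: (porbit_size x) => ->; rewrite eqxx ?orbT.
set m := #|[set C in porbits g | #|C| == p]|.
have nE : n = (k + m * p)%N.
  have := card_partition partition_porbits; rewrite cardsT card_ord => ->.
  rewrite (bigID (fun C : {set 'I_n} => #|C| == 1%N)) /=; congr (_ + _)%N.
    rewrite -c1 -sum1_card.
    transitivity (\sum_(C in [set C in porbits g | #|C| == 1%N]) #|C|).
      by apply: eq_bigl => C; rewrite inE.
    by apply: eq_bigr => C; rewrite inE => /andP[_ /eqP].
  rewrite /m -sum_nat_const.
  transitivity (\sum_(C in [set C in porbits g | #|C| == p]) #|C|).
    apply: eq_bigl => C; rewrite inE; case: (boolP (C \in porbits g)) => //= CP.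
    have := sizes C CP; case: (eqVneq #|C| 1%N) => //= ->.
    by rewrite (ltn_eqF p1).
  by apply: eq_bigr => C; rewrite inE => /andP[_ /eqP].
have -> : (n - k = m * p)%N by rewrite nE addKn.
rewrite mulnK ?prime_gt0 // dvdn_mull //; split => //; split => //.
Qed.

Lemma fixF : inv g (Fix g).
Proof. by apply: inv_subF. Qed.

Lemma qsr k : #|Fix g| = k -> (k < p)%N -> quasi_semiregular_on (ksubsets n k) g.
Proof.
move=> cF kp.
have U : forall B, #|B| = k -> inv g B -> B = Fix g.
  move=> B cB iB; apply/eqP; rewrite eqEcard cF cB leqnn andbT.
  apply/subsetP => x xB; rewrite inE; apply/negPn/negP => nx.
  have := subset_leq_card (porbit_sub iB xB); rewrite porbit_nfix // cB.
  by rewrite leqNgt kp.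
exists (Fix g); split.
- by rewrite inE cF.
- by move=> h hg; apply: inv_cycle fixF hg.
- move=> B; rewrite inE => /eqP cB H.
apply: (U B cB); apply/invP; apply: H.
  exact: cycle_id.
- move=> B; rewrite inE => /eqP cB ne h hg fh.
  apply/eqP; apply/negPn/negP => h1.
  have oh : #[h] = p.
    have := order_dvdG hg; rewrite -/(#[g]) og.
    apply/(prime_nt_dvdP pp); by rewrite order_eq1.
  have eq : <[h]> = <[g]>.
    apply/eqP; rewrite eqEcard cycle_subG hg /= -/(#[h]) -/(#[g]) og oh leqnn //.
  have : inv g B.
    apply/invP; apply: (inv_cycle (g:=h)); first by apply/invP.
    by rewrite eq cycle_id.
  by move/(U _ cB) => E; rewrite E eqxx in ne.
Qed.
End Prime.
End Tool.
Section Construct.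
Variables (n k p m : nat).
Hypotheses (p1 : (1 < p)%N) (nE : n = (k + m * p)%N).

Definition fn (j : nat) : nat :=
  if (j < k)%N then j else (k + (p * ((j - k) %/ p) + (j - k).+1 %% p))%N.

Lemma p0 : (0 < p)%N. Proof. exact: ltnW. Qed.

Lemma fn_lt j : (j < n)%N -> (fn j < n)%N.
Proof.
rewrite /fn nE; case: (ltnP j k) => [jk|kj] jn; first by rewrite ltn_addr.
rewrite ltn_add2l.
have q : ((j - k) %/ p < m)%N by rewrite ltn_divLR ?p0 // ltn_subLR.
apply: (@leq_trans (p * ((j - k) %/ p) + p)).
  by rewrite ltn_add2l ltn_mod p0.
by rewrite -mulnSr mulnC leq_pmul2r ?p0.
Qed.

Lemma decomp q r : (r < p)%N -> ((p * q + r) %/ p = q /\ (p * q + r) %% p = r)%N.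
Proof.
move=> rp; rewrite mulnC divnMDl ?p0 // modnMDl divn_small // addn0 modn_small //.
Qed.

Lemma fn_inj j1 j2 : fn j1 = fn j2 -> j1 = j2.
Proof.
rewrite /fn; case: (ltnP j1 k) => [h1|h1]; case: (ltnP j2 k) => [h2|h2] //.
- move=> E; move: h1; rewrite E; by rewrite ltnNge leq_addr.
- move=> E; move: h2; rewrite -E; by rewrite ltnNge leq_addr.
move/addnI => E.
have lm : forall t, (t %% p < p)%N by move=> t; rewrite ltn_mod p0.
have [q1 r1] := decomp ((j1 - k) %/ p) (lm (j1 - k).+1).
have [q2 r2] := decomp ((j2 - k) %/ p) (lm (j2 - k).+1).
move: (q1) (r1); rewrite E q2 r2 => eq1 eq2.
have em : ((j1 - k) %% p = (j2 - k) %% p)%N.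
  apply/eqP; rewrite -(eqn_modDr 1) !addn1; exact/eqP.
have : (j1 - k = j2 - k)%N.
  by rewrite (divn_eq (j1 - k) p) (divn_eq (j2 - k) p) em eq1.
by move=> /(f_equal (fun t => t + k)%N); rewrite !subnK.
Qed.

Lemma fn_iter i j : (k <= j)%N ->
  iter i fn j = (k + (p * ((j - k) %/ p) + ((j - k) + i) %% p))%N.
Proof.
move=> kj; elim: i => [|i IH] /=.
  by rewrite addn0 mulnC -divn_eq subnKC.
rewrite IH {1}/fn ltnNge leq_addr /= addKn.
have lm : forall t, (t %% p < p)%N by move=> t; rewrite ltn_mod p0.
have [-> _] := decomp ((j - k) %/ p) (lm (j - k + i)%N).
rewrite -addnS mulnC modnMDl -addn1 modnDml addn1 addnS //.
Qed.

Lemma fn_fix j : (j < k)%N -> iter p fn j = j.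
Proof.
move=> jk; elim: p => //= i ->; by rewrite /fn jk.
Qed.

Lemma fn_per j : iter p fn j = j.
Proof.
case: (ltnP j k) => [|kj]; first exact: fn_fix.
by rewrite fn_iter // modnDr mulnC -divn_eq subnKC.
Qed.

Lemma fn_nfix j : (k <= j)%N -> fn j != j.
Proof.
move=> kj; rewrite /fn ltnNge kj /=.
rewrite -{3}(subnKC kj) eqn_add2l {3}(divn_eq (j - k) p) mulnC eqn_add2l.
have : ((j - k) %% p < p)%N by rewrite ltn_mod p0.
rewrite -[(j - k).+1]addn1 -modnDml addn1.
case: (ltngtP ((j - k) %% p).+1 p) => [lt _|//|eq _].
  by rewrite modn_small // (gtn_eqF (ltnSn _)).
rewrite eq modnn eq_sym -lt0n -ltnS eq //.
Qed.


Hypothesis m0 : (0 < m)%N.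

Definition fo (x : 'I_n) : 'I_n := Ordinal (fn_lt (ltn_ord x)).
Lemma fo_inj : injective fo.
Proof. by move=> x y /(f_equal val) /= /fn_inj E; apply: val_inj. Qed.
Definition gc : {perm 'I_n} := perm fo_inj.

Lemma gcX i x : val ((gc ^+ i) x) = iter i fn x.
Proof.
elim: i => [|i IH]; first by rewrite expg0 perm1.
by rewrite expgSr permM /gc permE /= IH.
Qed.

Lemma kn : (k < n)%N.
Proof. by rewrite nE -[X in (X < _)%N]addn0 ltn_add2l muln_gt0 m0 p0. Qed.

Lemma gc_order_dvd : #[gc] %| p.
Proof.
rewrite order_dvdn; apply/eqP/permP => x; apply: val_inj.
by rewrite gcX fn_per perm1.
Qed.

Lemma gc_neq1 : gc != 1.
Proof.
apply/eqP => /permP /(_ (Ordinal kn)) /(f_equal val).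
rewrite perm1 -(expg1 gc) gcX /= => E.
by move: (fn_nfix (leqnn k)); rewrite E eqxx.
Qed.

Lemma gc_fix : Fix gc = [set x : 'I_n | (x < k)%N].
Proof.
apply/setP => x; rewrite !inE.
have E : val (gc x) = fn x by rewrite -(expg1 gc) gcX.
case: (ltnP x k) => xk.
  by apply/eqP/val_inj; rewrite E /fn xk.
apply/negP => /eqP /(f_equal val); rewrite E => F.
by move: (fn_nfix xk); rewrite F eqxx.
Qed.

Lemma card_fix : #|Fix gc| = k.
Proof.
have kn' : (k <= n)%N by apply: ltnW kn.
rewrite gc_fix.
have -> : [set x : 'I_n | (x < k)%N] = widen_ord kn' @: [set: 'I_k].
  apply/setP => x; rewrite inE; apply/idP/imsetP => [xk|[y _ ->]]; last by rewrite /= ltn_ord.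
  by exists (Ordinal xk) => //; apply: val_inj.
rewrite card_imset ?cardsT ?card_ord //.
by move=> a b /(f_equal val) /= E; apply: val_inj.
Qed.
End Construct.

Theorem proposition6p2 (n k p : nat) :
  (1 <= k)%N -> (k.*2 < n)%N -> prime p ->
  ((exists g : {perm 'I_n}, #[g] = p /\ quasi_semiregular_on (ksubsets n k) g)
     <-> ((k < p)%N /\ p %| n - k))
  /\
  (forall g : {perm 'I_n}, #[g] = p -> quasi_semiregular_on (ksubsets n k) g ->
     has_cycle_type_1k_pm g k p ((n - k) %/ p)).
Proof.
move=> k1 k2 pp.
have main2 : forall g : {perm 'I_n}, #[g] = p ->
    quasi_semiregular_on (ksubsets n k) g ->
    [/\ (k < p)%N, p %| n - k & has_cycle_type_1k_pm g k p ((n - k) %/ p)].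
  move=> g og [A [Ak fixA uniqA _]].
  rewrite inE in Ak.
  have iA : inv g A by apply/invP; apply: fixA; apply: cycle_id.
  have [AF kp] : A = Fix g /\ (#|A| < p)%N.
    apply: (forward pp og) => //; rewrite ?(eqP Ak) //.
    move=> B cB iB; apply: uniqA; first by rewrite inE cB.
    by move=> h hg; apply: inv_cycle iB hg.
  have cF : #|Fix g| = k by rewrite -AF (eqP Ak).
  have [ct dv] := cycle_type pp og cF.
  by split => //; rewrite -(eqP Ak).
split; last by move=> g og q; case: (main2 g og q).
split; first by case=> g [og q]; case: (main2 g og q).
case=> kp dv.
have p1 : (1 < p)%N by apply: prime_gt1.
have kn : (k < n)%N by apply: leq_ltn_trans k2; rewrite -addnn leq_addr.
have nE : n = (k + (n - k) %/ p * p)%N by rewrite divnK // subnKC // ltnW.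
have m0 : (0 < (n - k) %/ p)%N.
  by rewrite divn_gt0 ?prime_gt0 // dvdn_leq // subn_gt0.
exists (gc p1 nE).
have og : #[gc p1 nE] = p.
  have ne : #[gc p1 nE] != 1%N by rewrite order_eq1 (gc_neq1 p1 nE m0).
  exact/(prime_nt_dvdP pp ne)/gc_order_dvd.
split => //; apply: (qsr pp og) => //; exact: card_fix.
Qed.
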